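(* Let $R$ be a regular expression with no concatenation under star. Let $R'$ be obtained from $R$ by deleting all Kleene stars that are nested inside another Kleene star and deleting every occurrence of $\varepsilon$ that appears inside a Kleene star. Then $Gl(R)=Gl(R')$.
   Context: Regular expressions over $\Sigma$: $R::=\varepsilon\mid a\mid R^*\mid R\cdot R\mid R+R$ ($a\in\Sigma$). $R$ has no concatenation under star if no concatenation operator occurs in any subexpression nested under a Kleene star. A linearisation of $R$ replaces each atom occurrence by a distinct fresh symbol (position) from an alphabet $\Gamma$ (the same positions serving for $R$ and $R'$, which have the same atom occurrences), $\overline\alpha$ denoting the original letter. The Glushkov automaton $Gl(R)$ is the trim part of $(\Sigma,\{i\}\uplus\Gamma,\Delta,\{i\},F)$ with $\Delta=\{(\alpha,\overline\beta,\beta):\exists u,v\in\Gamma^*,\ u\alpha\beta v\in L(R_{\mathrm{lin}})\}\cup\{(i,\overline\alpha,\alpha):\exists u,\ \alpha u\in L(R_{\mathrm{lin}})\}$ and $F=\{\alpha:\exists u,\ u\alpha\in L(R_{\mathrm{lin}})\}\cup(\{i\}$ if $\varepsilon\in L(R_{\mathrm{lin}}))$, where $R_{\mathrm{lin}}$ is the linearisation. *)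

(* Defs.v *)
From Stdlib Require Import List.
Import ListNotations.

Set Implicit Arguments.

Inductive regex (A : Type) : Type :=
| Eps : regex A
| Atom : A -> regex A
| Star : regex A -> regex A
| Cat : regex A -> regex A -> regex A
| Plus : regex A -> regex A -> regex A.
Arguments Eps {A}.

Inductive lang {A : Type} : regex A -> list A -> Prop :=
| lang_eps : lang Eps []
| lang_atom a : lang (Atom a) [a]
| lang_star_nil r : lang (Star r) []
| lang_star_app r u v : lang r u -> lang (Star r) v -> lang (Star r) (u ++ v)
| lang_cat r1 r2 u v : lang r1 u -> lang r2 v -> lang (Cat r1 r2) (u ++ v)
| lang_plus_l r1 r2 u : lang r1 u -> lang (Plus r1 r2) u
| lang_plus_r r1 r2 u : lang r2 u -> lang (Plus r1 r2) u.

Fixpoint no_cat {A : Type} (r : regex A) : Prop :=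
  match r with
  | Eps | Atom _ => True
  | Star r1 => no_cat r1
  | Cat _ _ => False
  | Plus r1 r2 => no_cat r1 /\ no_cat r2
  end.

Fixpoint no_cat_under_star {A : Type} (r : regex A) : Prop :=
  match r with
  | Eps | Atom _ => True
  | Star r1 => no_cat r1
  | Cat r1 r2 | Plus r1 r2 => no_cat_under_star r1 /\ no_cat_under_star r2
  end.

(* Combine two optional subexpressions under a binary operator, where
   [None] means "everything was deleted". *)
Definition opt_bin {A : Type} (op : regex A -> regex A -> regex A)
  (o1 o2 : option (regex A)) : option (regex A) :=
  match o1, o2 with
  | Some r1, Some r2 => Some (op r1 r2)
  | Some r1, None => Some r1
  | None, Some r2 => Some r2
  | None, None => None
  end.

Fixpoint strip_inner {A : Type} (r : regex A) : option (regex A) :=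
  match r with
  | Eps => None
  | Atom a => Some (Atom a)
  | Star r1 => strip_inner r1
  | Cat r1 r2 => opt_bin (@Cat A) (strip_inner r1) (strip_inner r2)
  | Plus r1 r2 => opt_bin (@Plus A) (strip_inner r1) (strip_inner r2)
  end.

(* If the body becomes empty (it consisted of
   eps only), the star of the empty expression is the expression eps. *)
Fixpoint strip {A : Type} (r : regex A) : regex A :=
  match r with
  | Eps => Eps
  | Atom a => Atom a
  | Star r1 => match strip_inner r1 with
               | Some r1' => Star r1'
               | None => Eps
               end
  | Cat r1 r2 => Cat (strip r1) (strip r2)
  | Plus r1 r2 => Plus (strip r1) (strip r2)
  end.

(* Linearisation: atom occurrences are numbered left to right; a position
   is a pair (index, original letter), so that the original letter of a
   position alpha is [snd alpha]. *)
Fixpoint lin_aux {A : Type} (r : regex A) (n : nat) : regex (nat * A) * nat :=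
  match r with
  | Eps => (Eps, n)
  | Atom a => (Atom (n, a), S n)
  | Star r1 => let (l1, n1) := lin_aux r1 n in (Star l1, n1)
  | Cat r1 r2 => let (l1, n1) := lin_aux r1 n in
                 let (l2, n2) := lin_aux r2 n1 in (Cat l1 l2, n2)
  | Plus r1 r2 => let (l1, n1) := lin_aux r1 n in
                  let (l2, n2) := lin_aux r2 n1 in (Plus l1 l2, n2)
  end.

Definition linearize {A : Type} (r : regex A) : regex (nat * A) := fst (lin_aux r 0).

Record automaton (Sigma Q : Type) := mkAut {
  a_states : Q -> Prop;
  a_init : Q -> Prop;
  a_delta : Q -> Sigma -> Q -> Prop;
  a_final : Q -> Prop }.

Definition aut_eq {Sigma Q : Type} (M N : automaton Sigma Q) : Prop :=
  (forall q, a_states M q <-> a_states N q) /\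
  (forall q, a_init M q <-> a_init N q) /\
  (forall q a q', a_delta M q a q' <-> a_delta N q a q') /\
  (forall q, a_final M q <-> a_final N q).

Section Glushkov.
Variable Sigma : Type.
Local Notation Pos := (nat * Sigma)%type.
(* states: None is the initial state i, Some alpha is position alpha *)
Local Notation St := (option Pos).

Definition gl_delta (L : regex Pos) (q : St) (a : Sigma) (q' : St) : Prop :=
  match q, q' with
  | Some al, Some be => a = snd be /\ exists u v, lang L (u ++ al :: be :: v)
  | None, Some al => a = snd al /\ exists u, lang L (al :: u)
  | _, None => False
  end.

Definition gl_final (L : regex Pos) (q : St) : Prop :=
  match q with
  | Some al => exists u, lang L (u ++ [al])
  | None => lang L []
  end.

Inductive reach (L : regex Pos) : St -> St -> Prop :=
| reach_refl q : reach L q q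
| reach_step q a q' q'' : gl_delta L q a q' -> reach L q' q'' -> reach L q q''.

Definition gl_trim_state (L : regex Pos) (q : St) : Prop :=
  reach L None q /\ exists f, reach L q f /\ gl_final L f.

(* Glushkov automaton of a linearised expression: trim part of
   (Sigma, {i} + Gamma, Delta, {i}, F). *)
Definition GlLin (L : regex Pos) : automaton Sigma St :=
  {| a_states := gl_trim_state L;
     a_init := fun q => q = None /\ gl_trim_state L q;
     a_delta := fun q a q' => gl_trim_state L q /\ gl_trim_state L q' /\ gl_delta L q a q';
     a_final := fun q => gl_trim_state L q /\ gl_final L q |}.

Definition Gl (R : regex Sigma) : automaton Sigma St := GlLin (linearize R).
End Glushkov.

(* Main.v *)
Require Import Defs.
From Stdlib Require Import List.
Import ListNotations.

Section Aux.
Variable B : Type.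

Fixpoint atoms (r : regex B) : list B :=
  match r with
  | Eps => []
  | Atom a => [a]
  | Star r1 => atoms r1
  | Cat r1 r2 | Plus r1 r2 => atoms r1 ++ atoms r2
  end.

Lemma lang_atoms r w : lang r w -> forall x, In x w -> In x (atoms r).
Proof.
  induction 1; simpl; intros x Hx; auto;
    repeat match goal with H : In _ (_ ++ _) |- _ => apply in_app_or in H end;
    try apply in_or_app; intuition (subst; auto).
Qed.

Lemma no_cat_single r x : no_cat r -> In x (atoms r) -> lang r [x].
Proof.
  induction r; simpl; intros Hn Hx; try tauto.
  - destruct Hx as [<-|[]]; constructor.
  - rewrite <- (app_nil_r [x]). constructor; auto. constructor.
  - apply in_app_or in Hx; destruct Hn; destruct Hx.
    + apply lang_plus_l; auto.
    + apply lang_plus_r; auto.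
Qed.

Lemma star_char (r : regex B) w : no_cat r ->
  (lang (Star r) w <-> forall x, In x w -> In x (atoms r)).
Proof.
  intros Hn; split.
  - intros H x Hx. exact (@lang_atoms (Star r) w H x Hx).
  - induction w as [|x w IH]; intros H.
    + constructor.
    + change (x :: w) with ([x] ++ w). constructor.
      * apply no_cat_single; auto. apply H; simpl; auto.
      * apply IH. intros y Hy; apply H; simpl; auto.
Qed.

Lemma strip_inner_props r : no_cat r ->
  match strip_inner r with
  | Some r' => no_cat r' /\ (forall x, In x (atoms r') <-> In x (atoms r))
  | None => atoms r = []
  end.
Proof.
  induction r; simpl; intros Hn; try tauto.
  - destruct Hn as [H1 H2]. specialize (IHr1 H1); specialize (IHr2 H2).
    destruct (strip_inner r1) as [s1|], (strip_inner r2) as [s2|]; simpl.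
    + destruct IHr1 as [A1 B1], IHr2 as [A2 B2]. split; [tauto|].
      intros x; split; intros Hx; apply in_app_or in Hx; apply in_or_app;
        destruct Hx; [left; apply B1 | right; apply B2 | left; apply B1 | right; apply B2]; auto.
    + destruct IHr1 as [A1 B1]. rewrite IHr2, app_nil_r. auto.
    + destruct IHr2 as [A2 B2]. rewrite IHr1. auto.
    + rewrite IHr1, IHr2; auto.
Qed.

Lemma lang_cat_inv (r1 r2 : regex B) w : lang (Cat r1 r2) w <-> exists u v, w = u ++ v /\ lang r1 u /\ lang r2 v.
Proof.
  split.
  - intros H; inversion H; subst; eauto.
  - intros (u & v & -> & H1 & H2); constructor; auto.
Qed.

Lemma lang_plus_inv (r1 r2 : regex B) w : lang (Plus r1 r2) w <-> lang r1 w \/ lang r2 w.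
Proof.
  split.
  - intros H; inversion H; subst; auto.
  - intros [H|H]; [apply lang_plus_l|apply lang_plus_r]; auto.
Qed.

Lemma lang_eps_inv w : lang (@Eps B) w <-> w = [].
Proof. split; [intros H; inversion H; auto | intros ->; constructor]. Qed.

Lemma strip_lang (r : regex B) : no_cat_under_star r -> forall w, lang (strip r) w <-> lang r w.
Proof.
  induction r; simpl; intros Hn w; try tauto.
  - pose proof (@strip_inner_props r Hn) as P.
    rewrite (@star_char r w Hn).
    destruct (strip_inner r) as [r'|].
    + destruct P as [P1 P2]. rewrite (@star_char r' w P1).
      split; intros H x Hx; apply P2; auto.
    + rewrite lang_eps_inv, P. split.
      * intros -> x [].
      * destruct w as [|x w]; auto. intros H; destruct (H x); simpl; auto.
  - destruct Hn as [H1 H2]. rewrite !lang_cat_inv.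
    split; intros (u & v & E & A & C); exists u, v;
      [rewrite <- IHr1, <- IHr2 | rewrite IHr1, IHr2]; auto.
  - destruct Hn as [H1 H2]. rewrite !lang_plus_inv, IHr1, IHr2; tauto.
Qed.
End Aux.

Lemma lin_no_cat {A} (r : regex A) n : no_cat r -> no_cat (fst (lin_aux r n)).
Proof.
  revert n; induction r; intros n Hn; simpl in *; try tauto; auto.
  - destruct (lin_aux r n) eqn:E. simpl. specialize (IHr n Hn). rewrite E in IHr; auto.
  - destruct Hn as [H1 H2].
    specialize (IHr1 n H1). destruct (lin_aux r1 n) as [l1 n1]. simpl in IHr1.
    specialize (IHr2 n1 H2). destruct (lin_aux r2 n1) as [l2 n2]. simpl in *. auto.
Qed.

Lemma lin_ncus {A} (r : regex A) n : no_cat_under_star r -> no_cat_under_star (fst (lin_aux r n)).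
Proof.
  revert n; induction r; intros n Hn; simpl in *; auto.
  - pose proof (lin_no_cat r n Hn). destruct (lin_aux r n); simpl in *; auto.
  - destruct Hn as [H1 H2].
    specialize (IHr1 n H1). destruct (lin_aux r1 n) as [l1 n1]. simpl in IHr1.
    specialize (IHr2 n1 H2). destruct (lin_aux r2 n1) as [l2 n2]. simpl in *. auto.
  - destruct Hn as [H1 H2].
    specialize (IHr1 n H1). destruct (lin_aux r1 n) as [l1 n1]. simpl in IHr1.
    specialize (IHr2 n1 H2). destruct (lin_aux r2 n1) as [l2 n2]. simpl in *. auto.
Qed.

Lemma lin_strip_inner {A} (r : regex A) n :
  match strip_inner r with
  | Some r' => strip_inner (fst (lin_aux r n)) = Some (fst (lin_aux r' n)) /\
               snd (lin_aux r' n) = snd (lin_aux r n)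
  | None => strip_inner (fst (lin_aux r n)) = None /\ snd (lin_aux r n) = n
  end.
Proof.
  revert n; induction r; intros n; simpl; auto.
  - specialize (IHr n). destruct (lin_aux r n) as [l m]. simpl in *. exact IHr.
  - specialize (IHr1 n). destruct (lin_aux r1 n) as [l1 n1] eqn:E1. simpl in IHr1.
    specialize (IHr2 n1). destruct (lin_aux r2 n1) as [l2 n2] eqn:E2. simpl in IHr2.
    simpl.
    destruct (strip_inner r1) as [s1|], (strip_inner r2) as [s2|]; simpl;
      destruct IHr1 as [I1 J1], IHr2 as [I2 J2]; rewrite I1, I2; simpl; auto; subst.
    all: try (destruct (lin_aux s1 n) as [a1 m1] eqn:F1; simpl in *; subst);
         try (destruct (lin_aux s2 _) as [a2 m2] eqn:F2; simpl in *; subst); auto.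
    all: idtac.
  - specialize (IHr1 n). destruct (lin_aux r1 n) as [l1 n1] eqn:E1. simpl in IHr1.
    specialize (IHr2 n1). destruct (lin_aux r2 n1) as [l2 n2] eqn:E2. simpl in IHr2.
    simpl.
    destruct (strip_inner r1) as [s1|], (strip_inner r2) as [s2|]; simpl;
      destruct IHr1 as [I1 J1], IHr2 as [I2 J2]; rewrite I1, I2; simpl; auto; subst.
    all: try (destruct (lin_aux s1 n) as [a1 m1] eqn:F1; simpl in *; subst);
         try (destruct (lin_aux s2 _) as [a2 m2] eqn:F2; simpl in *; subst); auto.
    all: idtac.
Qed.

Lemma lin_strip {A} (r : regex A) n :
  lin_aux (strip r) n = (strip (fst (lin_aux r n)), snd (lin_aux r n)).
Proof.
  revert n; induction r; intros n; simpl; auto.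
  - pose proof (lin_strip_inner r n) as H.
    destruct (lin_aux r n) as [l m]. simpl in *.
    destruct (strip_inner r) as [s|]; destruct H as [H1 H2]; rewrite H1; simpl.
    + destruct (lin_aux s n); simpl in *; subst; auto.
    + subst; auto.
  - rewrite IHr1. destruct (lin_aux r1 n) as [l1 n1]; simpl.
    rewrite IHr2. destruct (lin_aux r2 n1) as [l2 n2]; simpl. auto.
  - rewrite IHr1. destruct (lin_aux r1 n) as [l1 n1]; simpl.
    rewrite IHr2. destruct (lin_aux r2 n1) as [l2 n2]; simpl. auto.
Qed.

Section GlEq.
Variable Sigma : Type.
Variables L L' : regex (nat * Sigma).
Hypothesis HL : forall w, lang L w <-> lang L' w.

Lemma delta_eq q a q' : gl_delta L q a q' <-> gl_delta L' q a q'.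
Proof.
  destruct q as [al|], q' as [be|]; simpl; try tauto.
  - split; intros [H (u & v & H')]; split; auto; exists u, v; apply HL; auto.
  - split; intros [H (u & H')]; split; auto; exists u; apply HL; auto.
Qed.

Lemma final_eq q : gl_final L q <-> gl_final L' q.
Proof.
  destruct q; simpl; [split; intros [u H]; exists u; apply HL; auto | apply HL].
Qed.

Lemma reach_eq1 (M M' : regex (nat * Sigma)) : (forall q a q', gl_delta M q a q' -> gl_delta M' q a q') ->
  forall q q', reach M q q' -> reach M' q q'.
Proof.
  intros Hd q q' H; induction H; [constructor | econstructor; eauto].
Qed.

Lemma reach_eq q q' : reach L q q' <-> reach L' q q'.
Proof.
  split; apply reach_eq1; intros; apply delta_eq; auto.
Qed.

Lemma trim_eq q : gl_trim_state L q <-> gl_trim_state L' q.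
Proof.
  unfold gl_trim_state. rewrite reach_eq. split; intros [H (f & H1 & H2)]; split; auto;
  exists f; rewrite reach_eq, final_eq in *; auto.
Qed.

Lemma GlLin_eq : aut_eq (GlLin L) (GlLin L').
Proof.
  unfold aut_eq; simpl; repeat split; intros;
    repeat match goal with H : _ /\ _ |- _ => destruct H end;
    repeat split; auto;
    try (apply trim_eq; auto); try (apply delta_eq; auto); try (apply final_eq; auto).
Qed.
End GlEq.

Theorem lemmaD50 (Sigma : Type) (R : regex Sigma) :
  no_cat_under_star R -> aut_eq (Gl R) (Gl (strip R)).
Proof.
  intros H. unfold Gl, linearize. rewrite lin_strip. simpl.
  apply GlLin_eq. intros w. symmetry. apply strip_lang. apply lin_ncus; auto.
Qed.
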